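(* Let $n,m,k$ be positive integers with $k\mid n$, let $p\in(0,1/2)$, and let $\mu_1,\dots,\mu_k\in\{0,1\}^m$ be fixed. Let $V=V_1\sqcup\dots\sqcup V_k$ with $|V_i|=n/k$, where every person $v\in V_i$ answers question $s\in\{1,\dots,m\}$ with $v(s)=\mu_i(s)$ with probability $1-p$ and $v(s)=1-\mu_i(s)$ with probability $p$, independently across persons and questions. Let $\mathcal P$ be the set of cuts $\{A_s^0,A_s^1\}$, $s=1,\dots,m$, with $A_s^y=\{v\in V: v(s)=y\}$. Let $a\in\mathbb N$ be the agreement parameter and $\alpha=a/n$. If $p<(n-ka)/(3n)$, then the probability that some mindset $\mu_i$ does not induce a $\mathcal P$-tangle is at most $$k\,m\,\exp\Bigl(-\frac{2n}{9k}(1-k\alpha-3p)^2\Bigr).$$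
   Context: An orientation of $\mathcal P$ chooses one side of every cut; it is identified with $\tau\in\{0,1\}^m$ by choosing the side $A_s^{\tau(s)}$ for question $s$. An orientation $O$ is a $\mathcal P$-tangle if for all (not necessarily distinct) chosen sides $A,B,C\in O$ we have $|A\cap B\cap C|\ge a$. The mindset $\mu_i$ induces a tangle if the orientation corresponding to $\mu_i$ is a $\mathcal P$-tangle. The probability is over the random answers. *)

(* Defs.v *)
From HB Require Import structures.
From mathcomp Require Import all_boot all_order all_algebra.
From mathcomp Require Import reals.
From mathcomp.analysis Require Import sequences exp.
Set Implicit Arguments. Unset Strict Implicit. Unset Printing Implicit Defensive.
Import Order.TTheory GRing.Theory Num.Theory.
Local Open Scope ring_scope.

(* Persons are 'I_n, questions are 'I_m, groups are 'I_k.
   An answer profile assigns to each person v and question s the answer v(s). *)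
Definition profile (n m : nat) := {ffun 'I_n -> {ffun 'I_m -> bool}}.

Definition prof_prob (R : realType) (n m k : nat) (grp : 'I_n -> 'I_k)
  (mu : 'I_k -> {ffun 'I_m -> bool}) (p : R) (w : profile n m) : R :=
  \prod_(v : 'I_n) \prod_(s : 'I_m)
     (if w v s == mu (grp v) s then 1 - p else p).

Definition side (n m : nat) (w : profile n m) (s : 'I_m) (y : bool) : {set 'I_n} :=
  [set v | w v s == y].

Definition is_tangle (n m : nat) (w : profile n m) (a : nat) (tau : 'I_m -> bool) : bool :=
  [forall s1 : 'I_m, forall s2 : 'I_m, forall s3 : 'I_m,
     a <= #|side w s1 (tau s1) :&: side w s2 (tau s2) :&: side w s3 (tau s3)|]%N.

Definition prob_some_fails (R : realType) (n m k : nat) (grp : 'I_n -> 'I_k)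
  (mu : 'I_k -> {ffun 'I_m -> bool}) (p : R) (a : nat) : R :=
  \sum_(w : profile n m | [exists i : 'I_k, ~~ is_tangle w a (mu i)])
     prof_prob grp mu p w.

(* Main.v *)
Require Import Defs.
From HB Require Import structures.
From mathcomp Require Import all_boot all_order all_algebra.
From mathcomp Require Import reals.
From mathcomp.analysis Require Import sequences exp.
From mathcomp Require Import boolp classical_sets functions topology normedtype derive realfun.
From mathcomp Require Import ring lra zify.
Import Order.TTheory GRing.Theory Num.Theory.
Import numFieldNormedType.Exports.
Local Open Scope ring_scope.

Section Analytic.
Variable R : realType.

Lemma mono0 (f df : R -> R) (x : R) :
  (forall y : R, is_derive y 1 f (df y)) -> (forall y, 0 <= y -> 0 <= df y) ->
  0 <= x -> f 0 <= f x.
Proof.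
move=> fd dfp x0.
have cf : {within `[0, x], continuous f}%classic.
  apply/continuous_subspaceT=> r.
  apply/differentiable_continuous/derivable1_diffP.
  by case: (fd r).
have [c /andP[c0 cx] E] := MVT_segment x0 (fun y _ => fd y) cf.
rewrite -subr_ge0 E subr0; apply: mulr_ge0; last by [].
by apply: dfp; move: c0; rewrite bnd_simp.
Qed.

Lemma Dpos (p y : R) : 0 <= p <= 1 -> 0 < 1 - p + p * expR y.
Proof.
move=> /andP[p0 p1]; have e0 := expR_gt0 y.
have [->|pn0] := eqVneq p 0; first by rewrite mul0r subr0 addr0.
have : 0 < p by rewrite lt_def pn0 p0.
move=> pp; have := mulr_gt0 pp e0; lra.
Qed.

Lemma gpos (p l : R) : 0 <= p <= 1 -> 0 <= l ->
  0 <= p + l / 4 - p * expR l * (1 - p + p * expR l)^-1.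
Proof.
move=> hp l0.
pose g := fun y : R => p + y / 4 - p * expR y * (1 - p + p * expR y)^-1.
have -> : 0 = g 0 by rewrite /g expR0 mulr1 subrK invr1 mulr1 mul0r addr0 subrr.
apply: (@mono0 g (fun y => 1/4 - p * expR y * (1 - p) / (1 - p + p * expR y) ^+ 2)) => //.
- move=> y; have Dn : 1 - p + p * expR y != 0 by rewrite gt_eqF // Dpos.
  apply: trigger_derive; rewrite /GRing.scale /=.
  field; exact: Dn.
- move=> y _; have Dp := @Dpos p y hp; have e0 := expR_gt0 y.
  rewrite subr_ge0 ler_pdivrMr ?exprn_gt0 //.
  case/andP: hp => p0 p1.
  set e := expR y in Dp e0 *.
  have : 0 <= (1 - p - p * e) ^+ 2 by apply: sqr_ge0.
  nra.
Qed.

Lemma hoeff (p l : R) : 0 <= p <= 1 -> 0 <= l ->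
  1 - p + p * expR l <= expR (l * p + l ^+ 2 / 8).
Proof.
move=> hp l0.
pose G := fun y : R => - ((1 - p + p * expR y) * expR (- (y * p) - y ^+ 2 / 8)).
have : G 0 <= G l.
  apply: (@mono0 G (fun y => expR (- (y * p) - y ^+ 2 / 8) * (1 - p + p * expR y) *
     (p + y / 4 - p * expR y * (1 - p + p * expR y)^-1))) => //.
  - move=> y; have Dn : 1 - p + p * expR y != 0 by rewrite gt_eqF // Dpos.
    apply: trigger_derive; rewrite /GRing.scale /=.
    field; exact: Dn.
  - move=> y y0; apply: mulr_ge0; last exact: gpos.
    by apply: mulr_ge0; [apply: ltW; apply: expR_gt0| apply: ltW; apply: Dpos].
have -> : G 0 = -1 by rewrite /G expR0 mulr1 subrK mul1r mul0r oppr0 expr0n /= mul0r subr0 expR0.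
rewrite /G.
rewrite lerNl opprK => H.
have := expRxMexpNx_1 (l * p + l ^+ 2 / 8).
have -> : - (l * p + l ^+ 2 / 8) = - (l * p) - l ^+ 2 / 8 by rewrite opprD.
move=> E.
have ep := expR_gt0 (l * p + l ^+ 2 / 8).
rewrite -(ler_pM2r (expR_gt0 (- (l * p) - l ^+ 2 / 8))) E.
exact: H.
Qed.
End Analytic.

Section Comb.
Variables (R : realType) (n m k : nat) (grp : 'I_n -> 'I_k)
  (mu : 'I_k -> {ffun 'I_m -> bool}) (p : R).

Definition Xc (w : profile n m) (i : 'I_k) (s : 'I_m) : nat :=
  #|[set v | (grp v == i) && (w v s != mu i s)]|.

Lemma tangle_of (w : profile n m) (a : nat) (i : 'I_k) :
  [forall s, a + 3 * Xc w i s <= #|[set v | grp v == i]|]%N -> is_tangle w a (mu i).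
Proof.
move=> /forallP hs; apply/forallP => s1; apply/forallP => s2; apply/forallP => s3.
set E1 := [set v | (grp v == i) && (w v s1 != mu i s1)].
set E2 := [set v | (grp v == i) && (w v s2 != mu i s2)].
set E3 := [set v | (grp v == i) && (w v s3 != mu i s3)].
set S := [set v | (grp v == i) &&
   [&& w v s1 == mu i s1, w v s2 == mu i s2 & w v s3 == mu i s3]].
have sub : S \subset side w s1 (mu i s1) :&: side w s2 (mu i s2) :&: side w s3 (mu i s3).
  by apply/fintype.subsetP => v; rewrite !inE => /andP[_ /and3P[-> -> ->]].
apply: leq_trans (subset_leq_card sub).
have cov : [set v | grp v == i] \subset S :|: E1 :|: E2 :|: E3.
  apply/fintype.subsetP => v; rewrite !inE => ->.
  by case: (w v s1 == _); case: (w v s2 == _); case: (w v s3 == _).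
have H1 := subset_leq_card cov.
have H2 := (leq_card_setU (S :|: E1 :|: E2) E3).1.
have H3 := (leq_card_setU (S :|: E1) E2).1.
have H4 := (leq_card_setU S E1).1.
have h1 := hs s1; have h2 := hs s2; have h3 := hs s3.
rewrite /Xc -/E1 -/E2 -/E3 in h1 h2 h3.
lia.
Qed.

Lemma prof_ge0 (w : profile n m) : 0 <= p <= 1 -> 0 <= prof_prob grp mu p w.
Proof.
move=> /andP[p0 p1]; apply: prodr_ge0 => v _; apply: prodr_ge0 => s _.
by case: ifP => _ //; rewrite subr_ge0.
Qed.

Lemma sum_exp (i : 'I_k) (s : 'I_m) (e : R) :
  \sum_(w : profile n m) e ^+ Xc w i s * prof_prob grp mu p w =
  (1 - p + p * e) ^+ #|[set v | grp v == i]|.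
Proof.
pose F (v : 'I_n) (s' : 'I_m) (b : bool) :=
  (if b == mu (grp v) s' then 1 - p else p) *
  (if [&& grp v == i, s' == s & b != mu i s] then e else 1).
transitivity (\sum_(w : profile n m) \prod_(v : 'I_n) \prod_(s' : 'I_m) F v s' (w v s')).
  apply: eq_bigr => w _.
  under eq_bigr do rewrite big_split /=.
  rewrite big_split /= mulrC; congr (_ * _).
  have -> : \prod_(v : 'I_n) \prod_(s' : 'I_m)
      (if [&& grp v == i, s' == s & w v s' != mu i s] then e else 1) =
      \prod_(v : 'I_n) (if (grp v == i) && (w v s != mu i s) then e else 1).
    apply: eq_bigr => v _; rewrite (bigD1 s) //= eqxx big1 ?mulr1 //.
    by move=> s' /negbTE ->; rewrite andbF.
  rewrite /Xc -prodr_const big_mkcond /=; apply: eq_bigr => v _.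
  by rewrite inE.
transitivity (\prod_(v : 'I_n) \sum_(g : {ffun 'I_m -> bool})
                \prod_(s' : 'I_m) F v s' (g s')).
  by rewrite (bigA_distr_bigA (fun v (g : {ffun 'I_m -> bool}) =>
                \prod_(s' : 'I_m) F v s' (g s'))).
transitivity (\prod_(v : 'I_n) \prod_(s' : 'I_m) \sum_(b : bool) F v s' b).
  by apply: eq_bigr => v _; rewrite (bigA_distr_bigA (F v)).
transitivity (\prod_(v : 'I_n) (if grp v == i then 1 - p + p * e else 1)).
  apply: eq_bigr => v _.
  have B : \prod_(s' < m | s' != s) \sum_(b : bool) F v s' b = 1.
    apply: big1 => s' /negbTE hs'.
    by rewrite big_bool /F hs' andbF /=; case: (mu (grp v) s') => /=; ring.
  rewrite (bigD1 s) //= B mulr1 big_bool /F eqxx /=.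
  have [hg|hg] := eqVneq (grp v) i.
    by rewrite hg; case: (mu i s) => /=; ring.
  by case: (mu (grp v) s) => /=; ring.
rewrite -big_mkcond /= -prodr_const; apply: eq_bigl => v.
by rewrite inE.
Qed.

End Comb.
Arguments Xc {n m k} grp mu w i s.

Theorem lemma1 (R : realType) (n m k : nat) (p : R) (a : nat)
  (mu : 'I_k -> {ffun 'I_m -> bool}) (grp : 'I_n -> 'I_k) :
  (0 < n)%N -> (0 < m)%N -> (0 < k)%N -> (k %| n)%N ->
  0 < p -> p < 1 / 2 ->
  (forall i : 'I_k, #|[set v : 'I_n | grp v == i]| = (n %/ k)%N) ->
  p < (n%:R - k%:R * a%:R) / (3 * n%:R) ->
  prob_some_fails grp mu p a <=
    k%:R * m%:R *
    expR (- ((2 * n%:R) / (9 * k%:R)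
             * (1 - k%:R * (a%:R / n%:R) - 3 * p) ^+ 2)).
Proof.
move=> n0 m0 k0 kn p0 p12 hN hp.
set N := (n %/ k)%N.
have nR : n%:R != 0 :> R by rewrite pnatr_eq0 -lt0n.
have kR : k%:R != 0 :> R by rewrite pnatr_eq0 -lt0n.
have Nr : N%:R = n%:R / k%:R :> R by rewrite natr_div // unitfE.
have n0R : 0 < n%:R :> R by rewrite ltr0n.
have k0R : 0 < k%:R :> R by rewrite ltr0n.
set c : R := (N%:R - a%:R) / 3.
set d : R := c - p * N%:R.
have d0 : 0 <= d.
  have -> : d = (n%:R / k%:R) * ((n%:R - k%:R * a%:R) / (3 * n%:R) - p).
    rewrite /d /c Nr. set NN := n%:R. set KK := k%:R. set AA := a%:R. field; by apply/andP; split.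
  apply: mulr_ge0; first by apply: divr_ge0; apply: ltW.
  by rewrite subr_ge0 ltW.
have N0 : 0 < N%:R :> R by rewrite Nr divr_gt0.
set l : R := 4 * d / N%:R.
have l0 : 0 <= l by rewrite /l divr_ge0 // ?mulr_ge0 // ltW.
have hp1 : 0 <= p <= 1 by apply/andP; split; lra.
set T := expR (- ((2 * n%:R) / (9 * k%:R)
             * (1 - k%:R * (a%:R / n%:R) - 3 * p) ^+ 2)).
have tail : forall (i : 'I_k) (s : 'I_m),
  \sum_(w : profile n m | c < (Xc grp mu w i s)%:R) prof_prob grp mu p w <= T.
  move=> i s.
  apply: le_trans (_ : \sum_(w : profile n m) expR (- (l * c)) *
       (expR l ^+ Xc grp mu w i s * prof_prob grp mu p w) <= _).
    rewrite [X in X <= _]big_mkcond /=; apply: ler_sum => w _.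
    case: ifP => h.
      rewrite mulrA -[X in X <= _]mul1r; apply: ler_wpM2r; first exact: prof_ge0.
      rewrite -expRM_natl -expRD.
      apply: le_trans (expR_ge1Dx _); rewrite lerDl.
      have : 0 <= l * ((Xc grp mu w i s)%:R - c) by apply: mulr_ge0 => //; rewrite subr_ge0 ltW.
      nra.
    apply: mulr_ge0; first exact: expR_ge0.
    by apply: mulr_ge0; [apply: exprn_ge0; apply: expR_ge0 | apply: prof_ge0].
  rewrite -mulr_sumr sum_exp hN.
  apply: le_trans (_ : expR (- (l * c)) * expR (l * p + l ^+ 2 / 8) ^+ N <= _).
    apply: ler_wpM2l; first exact: expR_ge0.
    apply: lerXn2r; rewrite ?nnegrE; first exact: ltW (@Dpos R p l hp1).
      exact: expR_ge0.
    exact: hoeff.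
  rewrite -expRM_natl -expRD /T le_eqVlt; apply/orP; left; apply/eqP; congr expR.
  rewrite /l /d /c Nr. set NN := n%:R. set KK := k%:R. set AA := a%:R. field; by apply/andP; split.
rewrite /prob_some_fails.
apply: le_trans (_ : \sum_(w : profile n m) \sum_(i < k) \sum_(s < m)
    (if c < (Xc grp mu w i s)%:R then prof_prob grp mu p w else 0) <= _).
  rewrite big_mkcond /=; apply: ler_sum => w _.
  case: ifP => [/existsP[i hi]|_]; last first.
    apply: sumr_ge0 => i _; apply: sumr_ge0 => s _.
    by case: ifP => _ //; apply: prof_ge0.
  have : ~~ [forall s, (a + 3 * Xc grp mu w i s <= #|[set v | grp v == i]|)%N].
    by apply: contra hi; apply: tangle_of.
  rewrite negb_forall => /existsP[s]; rewrite -ltnNge hN => hs.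
  have hc : c < (Xc grp mu w i s)%:R.
    move: hs; rewrite -(ltr_nat R) natrD natrM => hs.
    rewrite /c; lra.
  rewrite (bigD1 i) //= (bigD1 s) //= hc.
  have h1 : 0 <= \sum_(s' < m | s' != s)
      (if c < (Xc grp mu w i s')%:R then prof_prob grp mu p w else 0).
    by apply: sumr_ge0 => s' _; case: ifP => _ //; apply: prof_ge0.
  have h2 : 0 <= \sum_(i' < k | i' != i) \sum_(s' < m)
      (if c < (Xc grp mu w i' s')%:R then prof_prob grp mu p w else 0).
    by apply: sumr_ge0 => i' _; apply: sumr_ge0 => s' _; case: ifP => _ //; apply: prof_ge0.
  lra.
apply: le_trans (_ : \sum_(i < k) \sum_(s < m) T <= _).
  rewrite exchange_big /=; apply: ler_sum => i _.
  rewrite exchange_big /=; apply: ler_sum => s _.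
  by rewrite -big_mkcond /=; apply: tail.
rewrite !sumr_const !card_ord -[T *+ m *+ k]mulr_natl -[T *+ m]mulr_natl mulrA.
exact: lexx.
Qed.
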